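(* Let $p,q\ge1$ be coprime, $n=p+q\ge 2$, and let $\mathsf{T}_c$ be the lower Christoffel word determined by $p,q$, whose suffix array is arithmetically progressed with ratio $k$. Let $\mathbf{M}$ be the $n\times n$ matrix with $\mathbf{M}[i,j]=\mathsf{T}_c[(\mathsf{SA}_{\mathsf{T}_c}[i]+j-1)\bmod n]$. Then for every $i\in[1..n-1]$, rows $i$ and $i+1$ of $\mathbf{M}$ differ in exactly two positions, namely in columns $i(n-k)\bmod n$ and $(i(n-k)+1)\bmod n$.
   Context: Alphabet $\{\mathtt{a}<\mathtt{b}\}$; lexicographic order with a proper prefix smaller than the longer string; suffix array $\mathsf{SA}_{\mathsf{T}}$: permutation of $[1..n]$ such that $\mathsf{T}[\mathsf{SA}_{\mathsf{T}}[i]..n]$ is the $i$-th smallest suffix. $x\bmod n$ denotes the representative of $x$ modulo $n$ in $[1..n]$; $x\operatorname{mod}_0 n$ the representative in $[0..n-1]$. An arithmetically progressed permutation of length $n$ with ratio $k\in[1..n-1]$ is a permutation $P$ of $[1..n]$ with $P[i+1]=P[i]+k\bmod n$. Lower Christoffel word determined by coprime $p,q\ge1$: the string $\mathsf{T}_c$ of length $n=p+q$ with $\mathsf{T}_c[i]=\mathtt{a}$ if $(i-1)q\operatorname{mod}_0 n< iq\operatorname{mod}_0 n$ and $\mathtt{b}$ otherwise, $i\in[1..n]$. *)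

(* Defs.v *)
From mathcomp Require Import all_boot.
Set Implicit Arguments. Unset Strict Implicit. Unset Printing Implicit Defensive.

(* Alphabet {a < b}: a is [false], b is [true]. Strings are [seq bool];
   positions are 1-indexed as in the paper. *)
Definition letter_a : bool := false.
Definition letter_b : bool := true.

Fixpoint lex_lt (s t : seq bool) : bool :=
  match s, t with
  | [::], [::] => false
  | [::], _ :: _ => true
  | _ :: _, [::] => false
  | x :: s', y :: t' => if x == y then lex_lt s' t' else (~~ x) && y
  end.

Definition charAt (T : seq bool) (i : nat) : bool := nth letter_a T i.-1.

Definition suffix (T : seq bool) (s : nat) : seq bool := drop s.-1 T.

Definition mod1 (x n : nat) : nat := if x %% n == 0 then n else x %% n.

Definition is_suffix_array (T : seq bool) (SA : nat -> nat) : Prop :=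
  let n := size T in
  (forall i, 1 <= i <= n -> 1 <= SA i <= n) /\
  {in [pred i | 1 <= i <= n] &, injective SA} /\
  (forall i, 1 <= i < n -> lex_lt (suffix T (SA i)) (suffix T (SA i.+1))).

Definition arith_progressed (n : nat) (P : nat -> nat) (k : nat) : Prop :=
  [/\ 1 <= k <= n - 1,
      (forall i, 1 <= i <= n -> 1 <= P i <= n),
      {in [pred i | 1 <= i <= n] &, injective P} &
      (forall i, 1 <= i < n -> P i.+1 = mod1 (P i + k) n)].

Definition christoffel (p q : nat) : seq bool :=
  let n := p + q in
  [seq (if ((i.-1 * q) %% n < (i * q) %% n) then letter_a else letter_b)
  | i <- iota 1 n].

Definition rotM (T : seq bool) (SA : nat -> nat) (i j : nat) : bool :=
  charAt T (mod1 (SA i + j - 1) (size T)).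

(* Main.v *)
Require Import Defs.
From mathcomp Require Import all_boot.
From mathcomp Require Import zify.

Lemma lex_first (s t : seq bool) m0 :
  m0 < size s -> m0 < size t ->
  (forall m, m < m0 -> nth false s m = nth false t m) ->
  nth false s m0 = false -> nth false t m0 = true -> lex_lt s t.
Proof.
elim: s t m0 => [|x s IH] [|y t] [|m0] //=.
- by move=> _ _ _ -> ->.
- move=> h1 h2 he hs ht; have := he 0 isT; rewrite /= => ->; rewrite eqxx.
  apply: (IH t m0) => // m hm; exact: (he m.+1).
Qed.

Lemma lex_prefix (s t : seq bool) :
  size s < size t ->
  (forall m, m < size s -> nth false s m = nth false t m) -> lex_lt s t.
Proof.
elim: s t => [|x s IH] [|y t] //= h he.
have := he 0 isT; rewrite /= => ->; rewrite eqxx.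
apply: IH => // m hm; exact: (he m.+1).
Qed.

Lemma lex_irr (s : seq bool) : lex_lt s s = false.
Proof. by elim: s => //= x s ->; rewrite eqxx. Qed.

Lemma lex_asym (s t : seq bool) : lex_lt s t -> lex_lt t s -> False.
Proof.
elim: s t => [|x s IH] [|y t] //=.
rewrite eq_sym; case: eqP => [_|]; first exact: IH.
by case: x; case: y.
Qed.
Section Chr.
Variables p q : nat.
Hypothesis hp : 0 < p.
Hypothesis hq : 0 < q.
Local Notation n := (p + q).

Lemma bitF y : y < n -> ((y < (y + q) %% n) = (y < p)).
Proof.
move=> hy; case: (ltnP y p) => h.
  by rewrite modn_small; lia.
have -> : y + q = (y - p) + n by lia.
by rewrite modnDr modn_small; lia.
Qed.

Lemma charF i : 0 < i ->
  (if (i.-1 * q %% n < (i * q) %% n) then letter_a else letter_b)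
  = (p <= i.-1 * q %% n).
Proof.
move=> hi; have -> : i * q = i.-1 * q + q by case: i hi => // i _; rewrite mulSn addnC.
rewrite -modnDml bitF ?ltn_mod ?addn_gt0 ?hp //.
by rewrite /letter_a /letter_b; case: ltnP.
Qed.

Lemma charAtE r : 1 <= r <= n -> charAt (christoffel p q) r = (p <= r.-1 * q %% n).
Proof.
move=> /andP[h1 h2]; rewrite /charAt /christoffel (nth_map 0); last first.
  by rewrite size_iota; lia.
rewrite nth_iota; last by lia.
rewrite charF; last by lia.
by have -> : 1 + r.-1 = r by lia.
Qed.

Definition xx s := s.-1 * q %% n.
Definition bitw w m := p <= (w + m * q) %% n.

Lemma suffixE s : 1 <= s <= n ->
  Defs.suffix (christoffel p q) s = mkseq (bitw (xx s)) (n - s.-1).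
Proof.
move=> /andP[h1 h2]; rewrite /Defs.suffix /christoffel -map_drop drop_iota.
apply: (@eq_from_nth _ false); first by rewrite size_map size_iota size_mkseq.
move=> m; rewrite size_map size_iota => hm.
rewrite (nth_map 0) ?size_iota // nth_iota // nth_mkseq // charF; last by lia.
rewrite /bitw /xx modnDml.
by have -> : (1 + s.-1 + m).-1 * q = s.-1 * q + m * q by rewrite -mulnDl; congr (_ * _); lia.
Qed.

Lemma Sstep w m : (w + m.+1 * q) %/ n = (w + m * q) %/ n + bitw w m.
Proof.
have hn : 0 < n by lia.
rewrite /bitw mulSn (addnC q) addnA.
set a := w + m * q.
rewrite {1}(divn_eq a n) -addnA divnMDl //; congr (_ + _).
have hy := ltn_mod a n.
case: leqP => h.
  have h1 : 1 <= (a %% n + q) %/ n by rewrite leq_divRL //; lia.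
  have h2 : (a %% n + q) %/ n < 2 by rewrite ltn_divLR //; lia.
  lia.
by rewrite divn_small //; lia.
Qed.

End Chr.
Section Lex.
Variables p q : nat.
Hypothesis hp : 0 < p.
Hypothesis hq : 0 < q.
Local Notation n := (p + q).

Lemma Sagree u v m0 : u < n -> v < n ->
  (forall m, m < m0 -> bitw p q v m = bitw p q u m) ->
  (u + m0 * q) %/ n = (v + m0 * q) %/ n.
Proof.
move=> hu hv; elim: m0 => [|m IH] he.
  by rewrite !mul0n !addn0 !divn_small.
rewrite !Sstep // IH; last by move=> m' hm'; apply: he; lia.
by rewrite (he m).
Qed.

Lemma lex_main s t : 1 <= s <= n -> 1 <= t <= n -> xx p q t < xx p q s ->
  lex_lt (Defs.suffix (christoffel p q) t) (Defs.suffix (christoffel p q) s).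
Proof.
move=> hs ht hlt; rewrite !suffixE //.
have hn : 0 < n by lia.
set u := xx p q s; set v := xx p q t.
have hu : u < n by rewrite /u /xx ltn_mod.
have hv : v < n by rewrite /v /xx ltn_mod.
set Ls := n - s.-1; set Lt := n - t.-1.
case: (boolP [exists m : 'I_(minn Lt Ls), bitw p q v m != bitw p q u m]).
  move=> /existsP[m hm].
  have exP : exists m, (m < minn Lt Ls) && (bitw p q v m != bitw p q u m).
    by exists (nat_of_ord m); rewrite ltn_ord hm.
  case: (ex_minnP exP) => m0 /andP[hm0 hd] hmin.
  have hagr : forall m, m < m0 -> bitw p q v m = bitw p q u m.
    move=> m' hm'; case: (eqVneq (bitw p q v m') (bitw p q u m')) => // hne.
    have h1 : m' < minn Lt Ls by lia.
    by have := hmin m'; rewrite h1 hne => /(_ isT); lia.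
  have hS := @Sagree u v m0 hu hv hagr.
  have hle : (v + m0.+1 * q) %/ n <= (u + m0.+1 * q) %/ n.
    by apply: leq_div2r; rewrite leq_add2r ltnW.
  rewrite !Sstep // hS leq_add2l in hle.
  apply: (@lex_first _ _ m0); rewrite ?size_mkseq; try lia.
    by move=> m' hm'; rewrite !nth_mkseq; try lia; apply: hagr.
  rewrite nth_mkseq; last by lia.
    by move: hle hd; case: (bitw p q v m0); case: (bitw p q u m0).
  rewrite nth_mkseq; last by lia.
    by move: hle hd; case: (bitw p q v m0); case: (bitw p q u m0).
rewrite negb_exists => /forallP hall.
have hagr : forall m, m < minn Lt Ls -> bitw p q v m = bitw p q u m.
  by move=> m hm; have := hall (Ordinal hm); rewrite negbK => /eqP.
case: (ltngtP Lt Ls) => hL.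
- apply: lex_prefix; rewrite !size_mkseq // => m hm.
  rewrite !nth_mkseq; try lia; apply: hagr; lia.
- exfalso.
  have hS := @Sagree u v Ls hu hv (fun m h => hagr m (leq_trans h (eq_leq (esym (minn_idPr (ltnW hL)))))).
  have hdv : n %| u + Ls * q.
    rewrite /dvdn /u /xx modnDml -mulnDl.
    have -> : s.-1 + Ls = n by rewrite /Ls; lia.
    by rewrite modnMr.
  have hlt2 : v + Ls * q < (u + Ls * q) %/ n * n by rewrite divnK // ltn_add2r.
  by move: hlt2; rewrite -ltn_divLR // hS ltnn.
- exfalso. have hst : s = t by rewrite /Ls /Lt in hL; lia.
  by move: hlt; rewrite /u /v hst ltnn.
Qed.

End Lex.
Lemma modS_cases n w : 0 < n ->
  w.+1 %% n = if w %% n == n.-1 then 0 else (w %% n).+1.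
Proof.
move=> hn; have hy := ltn_mod w n.
rewrite -addn1 -modnDml; case: eqP => h.
  by rewrite h addn1 prednK // modnn.
by rewrite modn_small addn1 //; lia.
Qed.

Lemma Gcong n k q i M : 0 < n -> k <= n -> (k * q) %% n = 1 ->
  ((i + M * q) %% n == 0) = (M == i * (n - k) %[mod n]).
Proof.
move=> hn hk hkq.
have hK : (i * (n - k) + i * k) %% n = 0.
  by rewrite -mulnDr subnK // modnMl.
apply/idP/idP => h.
- have h1 : (i * k + M) %% n = 0.
    have e : ((i + M * q) * k) %% n = 0 by rewrite -modnMml (eqP h) mul0n mod0n.
    rewrite mulnDl -mulnA -modnDmr -modnMmr (mulnC q) hkq muln1 modnDmr in e.
    exact: e.
  by rewrite -(eqn_modDr (i * k)) hK addnC h1.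
- have h1 : (1 + (n - k) * q) %% n = 0.
    by rewrite -hkq modnDml -mulnDl subnKC // modnMr.
  apply/eqP; rewrite -modnDmr -modnMml (eqP h) modnMml modnDmr mulnAC -mulnA.
  by rewrite -{1}(muln1 i) -mulnDr (mulnC q) -modnMmr h1 muln0 mod0n.
Qed.
Lemma mod1E a n : 0 < a -> 0 < n -> mod1 a n = (a.-1 %% n).+1.
Proof.
case: a => // b _ hn; rewrite /mod1 modS_cases //=.
case: (b %% n =P n.-1) => [->|_] /=; first by rewrite prednK.
by [].
Qed.

Lemma diffbit n p w : 0 < p -> p < n ->
  ((p <= w %% n) != (p <= w.+1 %% n)) <-> (w %% n = n.-1 \/ w %% n = p.-1).
Proof.
move=> hp hpn; have hn : 0 < n by lia.
have hy : w %% n < n by rewrite ltn_mod.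
rewrite modS_cases //; case: (w %% n =P n.-1) => h; split => //.
- by move=> _; left.
- by move=> _; rewrite h; apply/negP; lia.
- case: (leqP p (w %% n)) => h1; case: (leqP p (w %% n).+1) => h2 //= _; try lia.
- case => // hh; apply/negP; lia.
Qed.

Lemma E2aux n p q y : n = p + q -> 0 < p -> 0 < q -> y < n ->
  ((y + q.+1) %% n == 0) = (y == p.-1).
Proof.
move=> en hp hq hy; case: (ltnP (y + q.+1) n) => h.
  rewrite modn_small //; lia.
have -> : y + q.+1 = (y + q.+1 - n) + n by lia.
rewrite modnDr modn_small; lia.
Qed.

Lemma predeq a x : 0 < a -> (a.-1 == x) = (a == x.+1).
Proof. by case: a. Qed.

Lemma ar1 i X q : 0 < i -> i.-1 + X + q.+1 = i + (q + X).
Proof. case: i => // i _; lia. Qed.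

Lemma modpred n a b : 0 < a -> 0 < b -> a <= n ->
  (a == b %[mod n]) = (a == (b.-1 %% n).+1).
Proof.
case: a => // A; case: b => // B _ _ hA /=.
rewrite -(addn1 A) -(addn1 B) eqn_modDr (modn_small (m := A)) //.
by rewrite !addn1 eqSS.
Qed.

Lemma prednq p q : 0 < p -> 0 < q -> (p + q).-1 <> p.-1.
Proof. lia. Qed.

Lemma hi_bounds p q i : 0 < i <= p + q - 1 -> (0 < i <= p + q) /\ (0 < i.+1 <= p + q).
Proof. lia. Qed.
Theorem mainTheorem13 (p q : nat) (SA : nat -> nat) (k : nat) :
  0 < p -> 0 < q -> coprime p q -> 2 <= p + q ->
  is_suffix_array (christoffel p q) SA ->
  arith_progressed (p + q) SA k ->
  forall i, 1 <= i <= p + q - 1 ->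
    let n := p + q in
    let c1 := mod1 (i * (n - k)) n in
    let c2 := mod1 (i * (n - k) + 1) n in
    c1 != c2 /\
    (forall j, 1 <= j <= n ->
       (rotM (christoffel p q) SA i j != rotM (christoffel p q) SA i.+1 j)
       <-> (j = c1 \/ j = c2)).
Proof.
move=> hp hq hcop hn2 hSA hAP i hi n c1 c2.
have hsz : size (christoffel p q) = n by rewrite /christoffel size_map size_iota.
move: hSA; rewrite /is_suffix_array hsz => -[hrg [hinj hsort]].
case: hAP => hk hrg' hinj' hstep.
have hn : 0 < n by rewrite /n; lia.
have hcopn : coprime n q.
  by rewrite /n -coprime_modl modnDr coprime_modl.
have xinj : forall s t, 1 <= s <= n -> 1 <= t <= n -> xx p q s = xx p q t -> s = t.
  move=> s t hs ht.
  wlog hst : s t hs ht / s <= t.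
    move=> H; case: (leqP s t) => h; first exact: H.
    by move=> e; apply/esym; apply: (H t s ht hs (ltnW h)).
  rewrite /xx => e.
  have e2 : (s.-1 * q + (t - s) * q) %% n = (s.-1 * q + 0) %% n.
    rewrite addn0 -mulnDl; have -> : s.-1 + (t - s) = t.-1 by lia.
    exact: esym e.
  move/eqP: e2; rewrite eqn_modDl mod0n -/(dvdn n _) Gauss_dvdl // => hd.
  have : t - s = 0 by apply/eqP; apply: contraTT hd => h0; rewrite gtnNdvd //; lia.
  lia.
have incr : forall i, 1 <= i < n -> xx p q (SA i) < xx p q (SA i.+1).
  move=> i0 hi0.
  have hs1 := hrg i0 (ltac:(lia)).
  have hs2 := hrg i0.+1 (ltac:(lia)).
  have hl := hsort i0 hi0.
  case: (ltngtP (xx p q (SA i0)) (xx p q (SA i0.+1))) => // h.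
    exfalso; exact: (lex_asym _ _ hl (lex_main p q hp hq _ _ hs1 hs2 h)).
  by rewrite (xinj _ _ hs1 hs2 h) lex_irr in hl.
have xlt : forall s, xx p q s < n by move=> s; rewrite /xx ltn_mod.
have low : forall i, 1 <= i <= n -> i.-1 <= xx p q (SA i).
  elim=> // i0 IH hi0; case: i0 IH hi0 => // i0 IH hi0.
  have := incr i0.+1 (ltac:(lia)); have := IH (ltac:(lia)); lia.
have up : forall d, d < n -> xx p q (SA (n - d)) + d <= n.-1.
  elim=> [|d IH] hd; first by rewrite subn0 addn0; have := xlt (SA n); lia.
  have := IH (ltac:(lia)); have := incr (n - d.+1) (ltac:(lia)).
  have -> : (n - d.+1).+1 = n - d by lia.
  lia.
have xSA : forall i, 1 <= i <= n -> xx p q (SA i) = i.-1.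
  move=> i0 hi0; have := low i0 hi0; have := up (n - i0) (ltac:(lia)).
  have -> : n - (n - i0) = i0 by lia.
  lia.
have hkq : (k * q) %% n = 1.
  have e := hstep 1 (ltac:(lia)).
  have := xSA 2 (ltac:(lia)); rewrite e /xx mod1E //; last by have := hrg 1 (ltac:(lia)); lia.
  rewrite /= modnMml.
  have -> : (SA 1 + k).-1 = (SA 1).-1 + k by have := hrg 1 (ltac:(lia)); lia.
  rewrite mulnDl -modnDml.
  by have := xSA 1 (ltac:(lia)); rewrite /xx => ->; rewrite add0n.
have hkn : k <= n by rewrite /n; lia.
have row : forall i0 j, 1 <= i0 <= n -> 1 <= j <= n ->
    rotM (christoffel p q) SA i0 j = (p <= (i0.-1 + j.-1 * q) %% n).
  move=> i0 j hi0 hj; rewrite /rotM hsz.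
  have hs := hrg i0 hi0.
  rewrite mod1E; [|lia|lia].
  have hm := ltn_mod (SA i0 + j - 1).-1 n.
  rewrite charAtE //; last by rewrite /n in hm *; lia.
  rewrite /= modnMml.
  have -> : (SA i0 + j - 1).-1 = (SA i0).-1 + j.-1 by lia.
  rewrite mulnDl -modnDml.
  by have := xSA i0 hi0; rewrite /xx => ->.
have hK : 0 < i * (n - k) by rewrite muln_gt0; apply/andP; split; rewrite /n; lia.
have E1 : forall j, 1 <= j <= n -> ((i.-1 + j.-1 * q) %% n = n.-1 <-> j = c2).
  move=> j hj; rewrite /c2 mod1E ?addn1 //=.
  have hw : (i.-1 + j.-1 * q).+1 = i + j.-1 * q by rewrite /n in hi; lia.
  have step : ((i.-1 + j.-1 * q) %% n = n.-1) <-> ((i + j.-1 * q) %% n == 0).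
    rewrite -hw modS_cases //; case: ((i.-1 + j.-1 * q) %% n =P n.-1) => //.
  have hjn : j.-1 < n by move: hj; clear; rewrite /n; lia.
  rewrite step (@Gcong n k q i j.-1 hn hkn hkq) modn_small // predeq; last by case/andP: hj.
  by split => /eqP.
have E2 : forall j, 1 <= j <= n -> ((i.-1 + j.-1 * q) %% n = p.-1 <-> j = c1).
  move=> j hj; rewrite /c1 mod1E //.
  have hj0 : 0 < j by case/andP: hj.
  have hi0 : 0 < i by case/andP: hi.
  have hy : (i.-1 + j.-1 * q) %% n < n by rewrite ltn_mod.
  have step : ((i.-1 + j.-1 * q) %% n = p.-1) <-> ((i + j * q) %% n == 0).
    have e := @E2aux n p q _ erefl hp hq hy.
    have -> : i + j * q = i.-1 + j.-1 * q + q.+1 by rewrite -{1}(prednK hj0) mulSn ar1.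
    by rewrite modnDml in e; rewrite e; split => /eqP.
  rewrite step (@Gcong n k q i j hn hkn hkq) modpred //; last by case/andP: hj.
  by split => /eqP.
have hc1 : 1 <= c1 <= n by rewrite /c1 mod1E //= ltn_mod.
split.
  apply/eqP => e.
  have h1 := proj2 (E2 c1 hc1) erefl.
  have h2 := proj2 (E1 c1 hc1) e.
  by move: h1; rewrite h2; apply: prednq.
move=> j hj.
have [hin hin1] := hi_bounds p q i hi.
rewrite (row _ _ hin hj) (row _ _ hin1 hj) /=.
have hi0 : 0 < i by case/andP: hin.
have -> : i + j.-1 * q = (i.-1 + j.-1 * q).+1 by rewrite -addSn prednK.
have hpn : p < n by rewrite /n -{1}(addn0 p) ltn_add2l.
rewrite diffbit // (E1 j hj) (E2 j hj).
by split; case; auto.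
Qed.
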